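(* Let $\mathcal H=(M,n,\mathcal R)$ be an MMS, $S$ a closed bounded convex polytope, $x_0\in S$, and let $0<\Delta'\le\Delta$ satisfy $D_\Delta\cap S=g_{\Delta',\Delta}(D_{\Delta'}\cap S)$. If the scheduler has a winning strategy from $x_0$ in $\Sigma_{\Delta'}$, then the scheduler has a winning strategy from $x_0$ in $\Sigma_\Delta$.
   Context: An MMS is a tuple $\mathcal H=(M,n,\mathcal R)$ with $M$ a finite nonempty set of modes and $\mathcal R(m)\subseteq\mathbb R^n$ finite nonempty for each mode; let $R=\bigcup_m\mathcal R(m)$. For $\Delta>0$ let $D_\Delta=\{x_0+\Delta\sum_{r\in R}i_r r: i_r\in\mathbb N\}$, and let $g_{\Delta',\Delta}:D_{\Delta'}\to D_\Delta$ send $x_0+\Delta'\sum_{r}i_r r$ to $x_0+\Delta\sum_r i_r r$ (well defined). The schedulability game from $x_0$: in round $i\ge1$ the scheduler chooses $(m_i,t_i)\in M\times\mathbb R_{>0}$, the environment chooses $r_i\in\mathcal R(m_i)$, and $x_i=x_{i-1}+t_ir_i$; scheduler strategies map finite histories to timed moves. $\Sigma_\Delta$ is the set of scheduler strategies all of whose chosen delays are positive integer multiples of $\Delta$. A scheduler strategy is winning from $x_0$ if against every environment strategy the run satisfies $x_i\in S$ and $x_i+tr_{i+1}\in S$ for all $i\ge0$, $t\in[0,t_{i+1}]$, and $\sum_it_i=\infty$. *)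

(* Defs.v *)
From Stdlib Require Import Reals List.
From Stdlib Require Fin.
Import ListNotations.
Open Scope R_scope.
Set Implicit Arguments.

Definition Vec (n : nat) := Fin.t n -> R.

Definition vadd {n} (x y : Vec n) : Vec n := fun i => x i + y i.
Definition vscale {n} (c : R) (x : Vec n) : Vec n := fun i => c * x i.
Definition vzero {n} : Vec n := fun _ => 0.

Fixpoint dot {n : nat} : Vec n -> Vec n -> R :=
  match n return Vec n -> Vec n -> R with
  | O => fun _ _ => 0
  | S k => fun a x => a Fin.F1 * x Fin.F1 + dot (fun i => a (Fin.FS i)) (fun i => x (Fin.FS i))
  end.

Record MMS := {
  mode : Type;
  modes : list mode;                         (* enumeration of the finite set M *)
  modes_complete : forall m : mode, In m modes;
  modes_nonempty : modes <> nil;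
  dim : nat;
  rates : mode -> list (Vec dim);
  rates_nonempty : forall m, rates m <> nil
}.

Definition all_rates (H : MMS) : list (Vec (dim H)) :=
  concat (map (rates H) (modes H)).

Record polytope (n : nat) := {
  constraints : list (Vec n * R);
  bounded : exists B : R, forall x : Vec n,
      (forall c, In c constraints -> dot (fst c) x <= snd c) ->
      forall i, Rabs (x i) <= B
}.

Definition inS {n} (S : polytope n) (x : Vec n) : Prop :=
  forall c, In c (constraints S) -> dot (fst c) x <= snd c.

Fixpoint lincomb {n} (rs : list (Vec n)) (c : nat -> nat) : Vec n :=
  match rs with
  | [] => vzero
  | r :: rs' => vadd (vscale (INR (c O)) r) (lincomb rs' (fun j => c (S j)))
  end.

Definition grid_pt (H : MMS) (x0 : Vec (dim H)) (Delta : R) (c : nat -> nat) : Vec (dim H) :=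
  vadd x0 (vscale Delta (lincomb (all_rates H) c)).

Definition inD (H : MMS) (x0 : Vec (dim H)) (Delta : R) (y : Vec (dim H)) : Prop :=
  exists c, y = grid_pt H x0 Delta c.

(** D_Delta ∩ S = g_{Delta',Delta}(D_Delta' ∩ S), where
    g (x0 + Delta' sum i_r r) = x0 + Delta sum i_r r. *)
Definition grid_condition (H : MMS) (S : polytope (dim H)) (x0 : Vec (dim H)) (Delta' Delta : R) : Prop :=
  forall y : Vec (dim H),
    (inD H x0 Delta y /\ inS S y) <->
    (exists c, inS S (grid_pt H x0 Delta' c) /\ y = grid_pt H x0 Delta c).

(** The schedulability game. A round is (mode, delay, rate). *)
Definition round (H : MMS) : Type := (mode H * R * Vec (dim H))%type.
Definition history (H : MMS) : Type := list (round H).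

Definition sched_strategy (H : MMS) : Type := history H -> (mode H * R).
Definition env_strategy (H : MMS) : Type := history H -> (mode H * R) -> Vec (dim H).

Definition valid_sched (H : MMS) (sigma : sched_strategy H) : Prop :=
  forall h, 0 < snd (sigma h).

Definition valid_env (H : MMS) (env : env_strategy H) : Prop :=
  forall h mv, In (env h mv) (rates H (fst mv)).

Definition in_Sigma (H : MMS) (Delta : R) (sigma : sched_strategy H) : Prop :=
  valid_sched sigma /\
  forall h, exists k : nat, (1 <= k)%nat /\ snd (sigma h) = INR k * Delta.

Fixpoint hist (H : MMS) (sigma : sched_strategy H) (env : env_strategy H) (k : nat) : history H :=
  match k with
  | O => []
  | S k' => let h := hist sigma env k' in
            let mv := sigma h in
            h ++ [(fst mv, snd mv, env h mv)]
  end.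

Fixpoint pos_of (H : MMS) (x0 : Vec (dim H)) (h : history H) : Vec (dim H) :=
  match h with
  | [] => x0
  | (m, t, r) :: h' => @pos_of H (vadd x0 (vscale t r)) h'
  end.

(** x_k, and the (k+1)-th move (t_{k+1}, r_{k+1}). *)
Definition pos (H : MMS) (sigma : sched_strategy H) (env : env_strategy H) (x0 : Vec (dim H)) (k : nat) :=
  @pos_of H x0 (hist sigma env k).
Definition delay_at (H : MMS) (sigma : sched_strategy H) (env : env_strategy H) (k : nat) : R :=
  snd (sigma (hist sigma env k)).
Definition rate_at (H : MMS) (sigma : sched_strategy H) (env : env_strategy H) (k : nat) : Vec (dim H) :=
  env (hist sigma env k) (sigma (hist sigma env k)).

Definition winning (H : MMS) (S : polytope (dim H)) (x0 : Vec (dim H)) (sigma : sched_strategy H) : Prop :=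
  forall env : env_strategy H, valid_env env ->
    (forall k : nat,
        inS S (pos sigma env x0 k) /\
        forall t, 0 <= t <= delay_at sigma env k ->
          inS S (vadd (pos sigma env x0 k) (vscale t (rate_at sigma env k)))) /\
    (forall B : R, exists k : nat, sum_f_R0 (delay_at sigma env) k > B).

(* Main.v *)
Require Import Defs.
From Stdlib Require Import Reals List Lra Lia Psatz FunctionalExtensionality.
Import ListNotations.
Open Scope R_scope.
Set Implicit Arguments.

Lemma dot_lin : forall n (a x y z : Vec n) c,
  (forall i, z i = x i + c * y i) -> dot a z = dot a x + c * dot a y.
Proof.
  induction n as [|n IH]; intros a x y z c Hz; simpl.
  - ring.
  - rewrite (IH _ (fun i => x (Fin.FS i)) (fun i => y (Fin.FS i)) _ c)
      by (intro; apply Hz).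
    rewrite Hz; ring.
Qed.

Lemma lincomb_add : forall n (rs : list (Vec n)) c e k i,
  lincomb rs (fun j => (c j + k * e j)%nat) i = lincomb rs c i + INR k * lincomb rs e i.
Proof.
  induction rs as [|r rs IH]; intros c e k i; simpl.
  - unfold vzero; ring.
  - unfold vadd, vscale.
    rewrite (IH (fun j => c (S j)) (fun j => e (S j)) k i).
    rewrite plus_INR, mult_INR; ring.
Qed.

Lemma lincomb_zero : forall n (rs : list (Vec n)) i, lincomb rs (fun _ => 0%nat) i = 0.
Proof.
  induction rs as [|r rs IH]; intros i; simpl.
  - reflexivity.
  - unfold vadd, vscale. rewrite IH. simpl; ring.
Qed.

Lemma lincomb_In : forall n (rs : list (Vec n)) r, In r rs ->
  exists e, forall i, lincomb rs e i = r i.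
Proof.
  induction rs as [|r0 rs IH]; intros r Hin; simpl in Hin.
  - contradiction.
  - destruct Hin as [<-|Hin].
    + exists (fun j => match j with O => 1%nat | _ => 0%nat end).
      intro i; simpl; unfold vadd, vscale. rewrite lincomb_zero. simpl; ring.
    + destruct (IH r Hin) as [e He].
      exists (fun j => match j with O => 0%nat | S j => e j end).
      intro i; simpl; unfold vadd, vscale. rewrite He. simpl; ring.
Qed.

Lemma pos_of_app : forall H (h : history H) x0 m t r,
  pos_of x0 (h ++ [(m, t, r)]) = vadd (pos_of x0 h) (vscale t r).
Proof.
  induction h as [|[[m0 t0] r0] h IH]; intros x0 m t r; simpl.
  - reflexivity.
  - apply IH.
Qed.

Definition fR H (s : R) (x : round H) : round H := (fst (fst x), snd (fst x) / s, snd x).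
Definition gR H (s : R) (x : round H) : round H := (fst (fst x), snd (fst x) * s, snd x).

Lemma fg : forall H s (h : history H), s <> 0 -> map (fR s) (map (gR s) h) = h.
Proof.
  induction h as [|[[m t] r] h IH]; intros Hs; simpl; [reflexivity|].
  rewrite IH by assumption. unfold fR, gR; simpl.
  replace (t * s / s) with t by (field; assumption). reflexivity.
Qed.

Definition newsig H (s : R) (sig' : sched_strategy H) : sched_strategy H :=
  fun h => (fst (sig' (map (fR s) h)), snd (sig' (map (fR s) h)) * s).
Definition newenv H (s : R) (env : env_strategy H) : env_strategy H :=
  fun h mv => env (map (gR s) h) (fst mv, snd mv * s).

Lemma hist_rel : forall H s (sig' : sched_strategy H) env k, s <> 0 ->
  hist (newsig s sig') env k = map (gR s) (hist sig' (newenv s env) k).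
Proof.
  intros H s sig' env k Hs. induction k as [|k IH]; simpl; [reflexivity|].
  rewrite IH, map_app. unfold newsig. rewrite fg by assumption.
  simpl. unfold newenv, gR. simpl. reflexivity.
Qed.

Lemma sum_scale : forall (u v : nat -> R) s k, (forall i, u i = v i * s) ->
  sum_f_R0 u k = s * sum_f_R0 v k.
Proof.
  intros u v s k Hu; induction k; simpl; rewrite ?IHk, !Hu; ring.
Qed.

Lemma sum_pos : forall (v : nat -> R) k, (forall i, 0 < v i) -> 0 < sum_f_R0 v k.
Proof.
  intros v k Hv; induction k; simpl; [apply Hv|]. specialize (Hv (S k)); lra.
Qed.

Theorem lemma6 (H : MMS) (S : polytope (dim H)) (x0 : Vec (dim H))
  (hx0 : inS S x0) (Delta' Delta : R)
  (hD' : 0 < Delta') (hle : Delta' <= Delta)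
  (hgrid : grid_condition H S x0 Delta' Delta) :
  (exists sigma : sched_strategy H, in_Sigma Delta' sigma /\ winning S x0 sigma) ->
  exists sigma : sched_strategy H, in_Sigma Delta sigma /\ winning S x0 sigma.
Proof.
  intros [sig' [[Hv' Hk'] Hw']].
  set (s := Delta / Delta').
  assert (Hs1 : 1 <= s).
  { unfold s. apply (Rmult_le_reg_r Delta'); [lra|].
    field_simplify; lra. }
  assert (Hs0 : s <> 0) by lra.
  exists (newsig s sig'). split.
  - split.
    + intro h. unfold newsig; simpl. specialize (Hv' (map (fR s) h)). nra.
    + intro h. unfold newsig; simpl. destruct (Hk' (map (fR s) h)) as [k [Hk Ht]].
      exists k; split; [assumption|]. rewrite Ht. unfold s. field. lra.
  - intros env Henv.
    set (env' := newenv s env).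
    assert (Henv' : valid_env env').
    { intros h mv. unfold env', newenv. apply (Henv _ (fst mv, snd mv * s)). }
    destruct (Hw' env' Henv') as [Hin Hdiv].
    assert (Hdel : forall k, delay_at (newsig s sig') env k = delay_at sig' env' k * s).
    { intro k. unfold delay_at. rewrite hist_rel by assumption.
      unfold newsig at 1. simpl. rewrite fg by assumption. reflexivity. }
    assert (Hrate : forall k, rate_at (newsig s sig') env k = rate_at sig' env' k).
    { intro k. unfold rate_at. rewrite hist_rel by assumption.
      unfold newsig. rewrite fg by assumption. reflexivity. }
    assert (Hposs : forall k, Defs.pos (newsig s sig') env x0 (Datatypes.S k) =
       vadd (Defs.pos (newsig s sig') env x0 k)
         (vscale (delay_at (newsig s sig') env k) (rate_at (newsig s sig') env k))).
    { intro k. unfold Defs.pos at 1. simpl. rewrite pos_of_app. reflexivity. }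
    assert (Hposs' : forall k, Defs.pos sig' env' x0 (Datatypes.S k) =
       vadd (Defs.pos sig' env' x0 k) (vscale (delay_at sig' env' k) (rate_at sig' env' k))).
    { intro k. unfold Defs.pos at 1. simpl. rewrite pos_of_app. reflexivity. }
    assert (Hgr : forall k, exists c, Defs.pos sig' env' x0 k = grid_pt H x0 Delta' c /\
                   Defs.pos (newsig s sig') env x0 k = grid_pt H x0 Delta c).
    { induction k as [|k [c [E1 E2]]].
      - exists (fun _ => 0%nat). split; apply functional_extensionality; intro i;
          unfold Defs.pos, grid_pt, vadd, vscale; simpl; rewrite lincomb_zero; ring.
      - destruct (Hk' (hist sig' env' k)) as [n [_ Hn]].
        assert (Hr : In (rate_at sig' env' k) (all_rates H)).
        { unfold all_rates, rate_at. apply in_concat.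
          exists (rates H (fst (sig' (hist sig' env' k)))). split.
          - apply in_map. apply modes_complete.
          - apply Henv'. }
        destruct (lincomb_In _ _ Hr) as [e He].
        exists (fun j => (c j + n * e j)%nat).
        rewrite Hposs, Hposs', Hdel, Hrate, E1, E2.
        fold (delay_at sig' env' k) in Hn. rewrite Hn.
        split; apply functional_extensionality; intro i;
          unfold grid_pt, vadd, vscale; rewrite lincomb_add, He.
        + ring.
        + unfold s. field. lra. }
    assert (HinS : forall k, inS S (Defs.pos (newsig s sig') env x0 k)).
    { intro k. destruct (Hgr k) as [c [E1 E2]].
      assert (Hc : inS S (grid_pt H x0 Delta' c)) by (rewrite <- E1; apply (proj1 (Hin k))).
      exact (proj2 (proj2 (hgrid _) (ex_intro _ c (conj Hc E2)))). }
    split.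
    + intro k. split; [apply HinS|].
      intros t Ht a Ha.
      pose proof (HinS k a Ha) as A1.
      pose proof (HinS (Datatypes.S k) a Ha) as A2.
      rewrite Hposs in A2.
      set (T := delay_at (newsig s sig') env k) in *.
      set (p := Defs.pos (newsig s sig') env x0 k) in *.
      set (r := rate_at (newsig s sig') env k) in *.
      rewrite (@dot_lin _ (fst a) p r _ T) in A2 by (intro; reflexivity).
      rewrite (@dot_lin _ (fst a) p r _ t) by (intro; reflexivity).
      destruct (Rle_dec (dot (fst a) r) 0); nra.
    + intro B. destruct (Hdiv B) as [k Hk]. exists k.
      rewrite (@sum_scale _ _ s k Hdel).
      assert (0 < sum_f_R0 (delay_at sig' env') k).
      { apply sum_pos. intro i. apply Hv'. }
      nra.
Qed.
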